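(* Let $N=2$, $J=1$, $h_0=[0,1]^{\sf T}$, $h_1=[\cos\tau,\sin\tau]^{\sf T}$ with $\tau\in(-\pi/2,\pi/2)$, $\sigma_0^2,\sigma_1^2,\sigma_n^2>0$, and $c_1\in[-\sigma_0\sigma_1,\sigma_0\sigma_1]$. Then for every $\lambda\ge0$, \[ w_{\rm RZF}(\lambda)=\begin{bmatrix}-\dfrac{\cos\tau\,[(\sigma_1^2+\lambda)\sin\tau+c_1]}{(\sigma_1^2+\lambda)\cos^2\tau+\sigma_n^2}\\[2mm] 1\end{bmatrix}, \] and \[ \mathrm{MSE}(\lambda)=\frac{\delta^2(\sigma_1^2\cos^2\tau+\sigma_n^2)}{g(\lambda)^2}-\frac{2\sigma_n^2\delta\tan\tau}{g(\lambda)}+\sigma_n^2(\tan^2\tau+1), \] where $\delta:=\sigma_n^2\tan\tau-c_1\cos\tau$ and $g(\lambda):=\lambda\cos^2\tau+\sigma_1^2\cos^2\tau+\sigma_n^2>0$. Furthermore: (i) if $\delta=0$, then $\mathrm{MSE}(\lambda)=\sigma_n^2(\tan^2\tau+1)$ for all $\lambda\ge0$; (ii) if $\delta\neq0$ and $\gamma:=\sigma_n^2\tan\tau/\delta\le0$, then $\mathrm{MSE}(\lambda)$ is decreasing on $[0,\infty)$ and $\inf_{\lambda\ge0}\mathrm{MSE}(\lambda)=\lim_{\lambda\to\infty}\mathrm{MSE}(\lambda)$ (the zero-forcing limit); (iii) if $\delta\ne0$ and $\gamma>0$, then $\mathrm{MSE}$ is minimized over $[0,\infty)$ by $\lambda=-\dfrac{c_1(\sigma_1^2\cos^2\tau+\sigma_n^2)}{\sigma_n^2\sin\tau}>0$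 when $\gamma\in(0,1)$, and by $\lambda=0$ when $\gamma\ge1$.
   Context: Real-valued single-interference model: $y(k)=s_0(k)h_0+s_1(k)h_1+n(k)\in\mathbb{R}^N$, with real zero-mean jointly weakly stationary signals $s_0,s_1$, $\sigma_j^2:=E[s_j(k)^2]$, $c_1:=E[s_0(k)s_1(k)]$, and real zero-mean noise $n(k)\sim\mathcal{N}(0,\sigma_n^2I)$ uncorrelated with the signals. $R:=E[y(k)y(k)^{\sf T}]$. For $\lambda\ge0$, $R_\lambda:=R+\lambda h_1h_1^{\sf T}$ and the RZF beamformer is $w_{\rm RZF}(\lambda):=R_\lambda^{-1}h_0/(h_0^{\sf T}R_\lambda^{-1}h_0)$. The MSE of a beamformer $w$ is $J_{\rm MSE}(w):=E[(w^{\sf T}y(k)-s_0(k))^2]$, and $\mathrm{MSE}(\lambda):=J_{\rm MSE}(w_{\rm RZF}(\lambda))$. *)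

(* Defs.v *)
From HB Require Import structures.
From mathcomp Require Import all_boot all_order all_algebra.
From mathcomp Require Import all_classical all_reals all_analysis.
Set Implicit Arguments. Unset Strict Implicit. Unset Printing Implicit Defensive.
Import Order.TTheory GRing.Theory Num.Theory.
Local Open Scope ring_scope.

Section Beamforming.
Variable R : realType.
Variable N : nat.

(* Second-order statistics of the single-interference model
   y(k) = s0(k) h0 + s1(k) h1 + n(k):  sig0, sig1, sign are standard
   deviations (so sigma_j^2 = sig_j ^+ 2), c1 = E[s0 s1].
   R := E[y y^T] = sig0^2 h0 h0^T + sig1^2 h1 h1^T + c1 (h0 h1^T + h1 h0^T) + sign^2 I. *)
Definition Rcov (h0 h1 : 'cV[R]_N) (sig0 sig1 sign c1 : R) : 'M[R]_N :=
  sig0 ^+ 2 *: (h0 *m h0^T) + sig1 ^+ 2 *: (h1 *m h1^T)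
  + c1 *: (h0 *m h1^T + h1 *m h0^T) + sign ^+ 2 *: 1%:M.

Definition Rlam (h0 h1 : 'cV[R]_N) (sig0 sig1 sign c1 lam : R) : 'M[R]_N :=
  Rcov h0 h1 sig0 sig1 sign c1 + lam *: (h1 *m h1^T).

Definition wRZF (Rl : 'M[R]_N) (h0 : 'cV[R]_N) : 'cV[R]_N :=
  ((h0^T *m invmx Rl *m h0) 0 0)^-1 *: (invmx Rl *m h0).

(* J_MSE(w) := E[(w^T y - s0)^2]
             = w^T R w - 2 w^T E[y s0] + E[s0^2],
   with E[y s0] = sig0^2 h0 + c1 h1. *)
Definition Jmse (h0 h1 : 'cV[R]_N) (sig0 sig1 sign c1 : R) (w : 'cV[R]_N) : R :=
  (w^T *m Rcov h0 h1 sig0 sig1 sign c1 *m w) 0 0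
  - 2 * (w^T *m (sig0 ^+ 2 *: h0 + c1 *: h1)) 0 0 + sig0 ^+ 2.

Definition MSE (h0 h1 : 'cV[R]_N) (sig0 sig1 sign c1 lam : R) : R :=
  Jmse h0 h1 sig0 sig1 sign c1 (wRZF (Rlam h0 h1 sig0 sig1 sign c1 lam) h0).

End Beamforming.

Definition vec2 (R : realType) (a b : R) : 'cV[R]_2 :=
  \col_(i < 2) (if i == ord0 then a else b).

(* Main.v *)
Require Import Defs.
From HB Require Import structures.
From mathcomp Require Import all_boot all_order all_algebra.
From mathcomp Require Import all_classical all_reals all_analysis.
From mathcomp Require Import ring lra.
Import Order.TTheory GRing.Theory Num.Theory numFieldNormedType.Exports.
Local Open Scope classical_set_scope.
Local Open Scope ring_scope.

Section Aux.
Variable R : realType.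

Lemma col2_eq (v w : 'cV[R]_2) : v 0 0 = w 0 0 -> v 1 0 = w 1 0 -> v = w.
Proof.
move=> h0 h1; apply/matrixP => i j; rewrite (ord1 j).
case: i => [[|[|//]] Hi].
- by rewrite (_ : Ordinal Hi = 0) //; apply: val_inj.
- by rewrite (_ : Ordinal Hi = 1) //; apply: val_inj.
Qed.

Lemma mul2 (A : 'M[R]_2) (v : 'cV[R]_2) i : (A *m v) i 0 = A i 0 * v 0 0 + A i 1 * v 1 0.
Proof.
rewrite mxE big_ord_recr /= big_ord1.
have -> : widen_ord (leqnSn 1) ord0 = 0 :> 'I_2 by apply: val_inj.
by have -> : ord_max = 1 :> 'I_2 by apply: val_inj.
Qed.

Lemma mul2g m n (A : 'M[R]_(m,2)) (B : 'M[R]_(2,n)) i j :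
  (A *m B) i j = A i 0 * B 0 j + A i 1 * B 1 j.
Proof.
rewrite mxE big_ord_recr /= big_ord1.
have -> : widen_ord (leqnSn 1) ord0 = 0 :> 'I_2 by apply: val_inj.
by have -> : ord_max = 1 :> 'I_2 by apply: val_inj.
Qed.

Lemma vec2E0 (a b : R) : vec2 a b 0 0 = a. Proof. by rewrite mxE. Qed.
Lemma vec2E1 (a b : R) : vec2 a b 1 0 = b. Proof. by rewrite mxE. Qed.

Lemma det2 (A : 'M[R]_2) : \det A = A 0 0 * A 1 1 - A 0 1 * A 1 0.
Proof.
rewrite (expand_det_row _ 0) big_ord_recr big_ord1 /= /cofactor !det_mx11 /=.
rewrite !mxE /=.
have -> : widen_ord (leqnSn 1) ord0 = 0 :> 'I_2 by apply: val_inj.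
have -> : ord_max = 1 :> 'I_2 by apply: val_inj.
have -> : lift (0 : 'I_2) (0 : 'I_1) = 1 by apply: val_inj.
have -> : lift (1 : 'I_2) (0 : 'I_1) = 0 by apply: val_inj.
rewrite expr0 expr1 /=; ring.
Qed.

Lemma wRZF2 (A : 'M[R]_2) : \det A != 0 -> A 0 0 != 0 ->
  wRZF A (vec2 0 1) = vec2 (- (A 0 1) / A 0 0) 1.
Proof.
move=> dA a0.
have uA : A \in unitmx by rewrite unitmxE unitfE.
set v := invmx A *m vec2 0 1.
have Av : A *m v = vec2 0 1 by rewrite /v mulKVmx.
rewrite /wRZF -mulmxA -/v; clearbody v.
have e1 : A 0 0 * v 0 0 + A 0 1 * v 1 0 = 0 by rewrite -mul2 Av vec2E0.
have e2 : A 1 0 * v 0 0 + A 1 1 * v 1 0 = 1 by rewrite -mul2 Av vec2E1.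
have hv : ((vec2 0 1)^T *m v) 0 0 = v 1 0.
  rewrite mxE big_ord_recr /= big_ord1 !mxE /=.
  have -> : widen_ord (leqnSn 1) ord0 = 0 :> 'I_2 by apply: val_inj.
  have -> : ord_max = 1 :> 'I_2 by apply: val_inj.
  by ring.
have v1 : v 1 0 != 0.
  apply/eqP => v10; move: e1 e2; rewrite v10 !mulr0 !addr0 => /eqP.
  by rewrite mulf_eq0 (negbTE a0) /= => /eqP ->; rewrite mulr0 => /eqP; rewrite eq_sym oner_eq0.
rewrite hv; apply: col2_eq; rewrite !mxE /=.
  have -> : v 0 0 = - A 0 1 * v 1 0 / A 0 0.
    by apply: (mulfI a0); rewrite mulrCA mulfV // mulr1; lra.
  by field; apply/andP.
by rewrite mulVf.
Qed.

Variables (c s sig0 sig1 sign c1 lam : R).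
Let M := Rlam (vec2 0 1) (vec2 c s) sig0 sig1 sign c1 lam.
Lemma M00 : M 0 0 = (sig1^+2 + lam) * c^+2 + sign^+2.
Proof. rewrite /M /Rlam /Rcov !mxE !big_ord1 !mxE /=; ring. Qed.
Lemma M01 : M 0 1 = (sig1^+2 + lam) * c * s + c1 * c.
Proof. rewrite /M /Rlam /Rcov !mxE !big_ord1 !mxE /=; ring. Qed.
Lemma M10 : M 1 0 = (sig1^+2 + lam) * c * s + c1 * c.
Proof. rewrite /M /Rlam /Rcov !mxE !big_ord1 !mxE /=; ring. Qed.
Lemma M11 : M 1 1 = sig0^+2 + (sig1^+2 + lam) * s^+2 + 2 * c1 * s + sign^+2.
Proof. rewrite /M /Rlam /Rcov !mxE !big_ord1 !mxE /=; ring. Qed.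
Let C := Rcov (vec2 0 1) (vec2 c s) sig0 sig1 sign c1.
Lemma C00 : C 0 0 = sig1^+2 * c^+2 + sign^+2.
Proof. rewrite /C /Rcov !mxE !big_ord1 !mxE /=; ring. Qed.
Lemma C01 : C 0 1 = sig1^+2 * c * s + c1 * c.
Proof. rewrite /C /Rcov !mxE !big_ord1 !mxE /=; ring. Qed.
Lemma C10 : C 1 0 = sig1^+2 * c * s + c1 * c.
Proof. rewrite /C /Rcov !mxE !big_ord1 !mxE /=; ring. Qed.
Lemma C11 : C 1 1 = sig0^+2 + sig1^+2 * s^+2 + 2 * c1 * s + sign^+2.
Proof. rewrite /C /Rcov !mxE !big_ord1 !mxE /=; ring. Qed.

Lemma Jmse2 x : Jmse (vec2 0 1) (vec2 c s) sig0 sig1 sign c1 (vec2 x 1) =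
  sig1^+2 * (c * x + s)^+2 + sign^+2 * (x^+2 + 1).
Proof.
rewrite /Jmse -/C !mul2g C00 C01 C10 C11 !mxE /=; ring.
Qed.
End Aux.

Definition Pq {R : realType} (A B L u : R) := A * u^+2 - 2 * B * u + L.
Lemma Pdiff {R : realType} (A B L u w : R) :
  Pq A B L u - Pq A B L w = (u - w) * (A * (u + w) - 2 * B).
Proof. rewrite /Pq; ring. Qed.

Theorem lemma2 (R : realType) (tau sig0 sig1 sign c1 : R) :
  - (pi / 2) < tau < pi / 2 ->
  0 < sig0 -> 0 < sig1 -> 0 < sign ->
  - (sig0 * sig1) <= c1 <= sig0 * sig1 ->
  let h0 := vec2 0 1 in
  let h1 := vec2 (cos tau) (sin tau) in
  let mse := fun lam => MSE h0 h1 sig0 sig1 sign c1 lam in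
  let delta := sign ^+ 2 * tan tau - c1 * cos tau in
  let g := fun lam => lam * cos tau ^+ 2 + sig1 ^+ 2 * cos tau ^+ 2 + sign ^+ 2 in
  let gamma := sign ^+ 2 * tan tau / delta in
  (forall lam, 0 <= lam ->
     [/\ wRZF (Rlam h0 h1 sig0 sig1 sign c1 lam) h0 =
           vec2 (- (cos tau * ((sig1 ^+ 2 + lam) * sin tau + c1))
                  / ((sig1 ^+ 2 + lam) * cos tau ^+ 2 + sign ^+ 2)) 1,
         mse lam = delta ^+ 2 * (sig1 ^+ 2 * cos tau ^+ 2 + sign ^+ 2) / g lam ^+ 2
                   - 2 * sign ^+ 2 * delta * tan tau / g lam
                   + sign ^+ 2 * (tan tau ^+ 2 + 1)
       & 0 < g lam]) /\
  (delta = 0 -> forall lam, 0 <= lam -> mse lam = sign ^+ 2 * (tan tau ^+ 2 + 1)) /\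
  (delta != 0 -> gamma <= 0 ->
     (forall x y, 0 <= x -> x < y -> mse y < mse x) /\
     exists l : R, (mse x @[x --> +oo%R] --> (l : R^o)) /\
                   l = inf [set mse x | x in [set x : R | 0 <= x]]) /\
  (delta != 0 -> 0 < gamma < 1 ->
     let lamopt := - (c1 * (sig1 ^+ 2 * cos tau ^+ 2 + sign ^+ 2)) / (sign ^+ 2 * sin tau) in
     0 < lamopt /\ forall lam, 0 <= lam -> mse lamopt <= mse lam) /\
  (delta != 0 -> 1 <= gamma -> forall lam, 0 <= lam -> mse 0 <= mse lam).
Proof.
move=> /andP[Htl Htu] s0 s1 sn /andP[Hcl Hcu] h0 h1 mse delta g gamma.
have c0 : 0 < cos tau by apply: cos_gt0_pihalf; apply/andP.
have cs : cos tau ^+ 2 + sin tau ^+ 2 = 1 by exact: cos2Dsin2.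
have tE : tan tau = sin tau / cos tau by [].
have cn0 : cos tau != 0 by rewrite gt_eqF.
set c := cos tau. set s := sin tau. set t := tan tau.
set K := sig1^+2 * c^+2 + sign^+2.
have K0 : 0 < K by rewrite /K; nra.
have gE : forall lam, g lam = lam * c^+2 + K by move=> lam; rewrite /g /K addrA.
have gpos : forall lam, 0 <= lam -> 0 < g lam by move=> lam l0; rewrite gE; nra.
have c1sq : c1^+2 <= (sig0*sig1)^+2 by nra.
have quad : 0 <= sig1^+2 * s^+2 + 2 * c1 * s + sig0^+2.
  have e : sig1^+2 * (sig1^+2 * s^+2 + 2*c1*s + sig0^+2) = (sig1^+2*s + c1)^+2 + ((sig0*sig1)^+2 - c1^+2) by ring.
  have : 0 <= sig1^+2 * (sig1^+2 * s^+2 + 2*c1*s + sig0^+2).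
    by rewrite e; apply: addr_ge0; [exact: sqr_ge0 | rewrite subr_ge0].
  by rewrite pmulr_rge0 // exprn_gt0.
have s2 : s^+2 <= 1 by rewrite -cs lerDr sqr_ge0.
have Hw : forall lam, 0 <= lam -> wRZF (Rlam (vec2 0 1) (vec2 c s) sig0 sig1 sign c1 lam) (vec2 0 1) =
     vec2 (- (c * ((sig1 ^+ 2 + lam) * s + c1)) / ((sig1 ^+ 2 + lam) * c ^+ 2 + sign ^+ 2)) 1.
  move=> lam l0.
  have m0 : 0 < (sig1 ^+ 2 + lam) * c ^+ 2 + sign ^+ 2 by nra.
  rewrite wRZF2; last first.
    by rewrite M00 gt_eqF.
    rewrite det2 M00 M01 M10 M11.
    set a := sig1^+2 + lam.
    have -> : (a * c ^+ 2 + sign ^+ 2) * (sig0 ^+ 2 + a * s ^+ 2 + 2 * c1 * s + sign ^+ 2) -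
       (a * c * s + c1 * c) * (a * c * s + c1 * c) =
       c^+2 * (a * sig0^+2 - c1^+2) + sign^+2 * (a * (c^+2 + s^+2) + sig0^+2 + 2 * c1 * s + sign^+2) by rewrite /a; ring.
    rewrite cs mulr1 gt_eqF // ltr_pwDr //.
      rewrite mulr_gt0 ?exprn_gt0 //.
      have : sig1^+2 * s^+2 <= a by rewrite /a; nra.
      have : 0 < sign^+2 by rewrite exprn_gt0.
      lra.
    rewrite mulr_ge0 ?sqr_ge0 // subr_ge0.
    have : (sig0 * sig1)^+2 <= a * sig0^+2 by rewrite /a; nra.
    lra.
  rewrite M00 M01; congr vec2; field.
  by rewrite gt_eqF.
have Hcf : forall lam, 0 <= lam -> mse lam =
   delta ^+ 2 * (sig1 ^+ 2 * c ^+ 2 + sign ^+ 2) / g lam ^+ 2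
                   - 2 * sign ^+ 2 * delta * t / g lam
                   + sign ^+ 2 * (t ^+ 2 + 1).
  move=> lam l0.
  have g0 := gpos lam l0.
  have m0 : 0 < (sig1 ^+ 2 + lam) * c ^+ 2 + sign ^+ 2 by nra.
  rewrite /mse /MSE Hw // Jmse2 /delta.
  move: g0 m0; rewrite /g /K /c /s /t tE => g0 m0.
  field.
  by rewrite cn0 /= exprMn gt_eqF.
set A := delta ^+ 2 * K.
set B := sign ^+ 2 * delta * t.
set L := sign ^+ 2 * (t ^+ 2 + 1).
have Hm : forall lam, 0 <= lam -> mse lam = Pq A B L (g lam)^-1.
  move=> lam l0; have g0 := gpos lam l0.
  rewrite Hcf // /Pq /A /B /L /K; field.
  by rewrite gt_eqF.
have gV0 : forall lam, 0 <= lam -> 0 < (g lam)^-1 by move=> lam l0; rewrite invr_gt0 gpos.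
have Pq0 : Pq A B L 0 = L by rewrite /Pq; ring.
split.
  move=> lam l0; split; [exact: Hw | exact: Hcf | exact: gpos].
split.
  move=> d0 lam l0; rewrite Hm // /B /A d0 /Pq; ring.
split.
  move=> dn0 gle0.
  have d2 : 0 < delta ^+ 2 by rewrite lt_def sqr_ge0 expf_eq0 (negbTE dn0) andbF.
  have A0 : 0 < A by rewrite /A mulr_gt0.
  have hB : B <= 0.
    have -> : B = gamma * delta ^+ 2 by rewrite /B /gamma /t; field.
    by rewrite mulr_le0_ge0 // sqr_ge0.
  have lbS : forall x, 0 <= x -> L <= mse x.
    move=> x x0; rewrite Hm // -subr_ge0 -[X in _ - X]Pq0 Pdiff subr0 mulr_ge0 //; first exact: ltW (gV0 x x0).
    have := mulr_gt0 A0 (gV0 x x0); rewrite addr0; lra.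
  have Hu : (g x)^-1 @[x --> +oo] --> (0 : R).
    apply/gtr0_cvgV0.
      by exists 0; split => // x /ltW x0; apply: gpos.
    apply/cvgryPge => M; exists (M / c ^+ 2); split; first exact: num_real.
    move=> x; rewrite ltr_pdivrMr ?exprn_gt0 // => Mx; rewrite gE; lra.
  have Hlim : mse x @[x --> +oo] --> L.
    have E : {near +oo, (fun x => A * ((g x)^-1 * (g x)^-1) - 2 * B * (g x)^-1 + L) =1 mse}.
      exists 0; split => // x /ltW x0 /=; rewrite Hm // /Pq; ring.
    apply: cvg_trans (near_eq_cvg E) _.
    suff H : (A * ((g x)^-1 * (g x)^-1) - 2 * B * (g x)^-1 + L) @[x --> +oo] --> (A * (0 * 0) - 2 * B * 0 + L).
      by rewrite !mulr0 subr0 add0r in H.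
    apply: cvgD; last exact: cvg_cst.
    apply: cvgB; apply: cvgM; try exact: cvg_cst; try exact: Hu.
    exact: cvgM.
  split.
    move=> x y x0 xy.
    have y0 : 0 <= y by apply: (le_trans x0); apply: ltW.
    have gxy : g x < g y by rewrite !gE ltrD2r ltr_pM2r // exprn_gt0.
    rewrite !Hm // -subr_gt0 Pdiff mulr_gt0 //.
      by rewrite subr_gt0 ltf_pV2 // posrE gpos.
    have := mulr_gt0 A0 (addr_gt0 (gV0 x x0) (gV0 y y0)); lra.
  exists L; split; first exact: Hlim.
  apply/le_anti/andP; split.
    apply: lb_le_inf; first by exists (mse 0); exists 0 => //=.
    by move=> _ [x x0 <-]; apply: lbS.
  apply: (cvgr_to_ge Hlim).
  exists 0; split => // x /ltW x0.
  apply: ge_inf; last by exists x.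
  by exists L => _ [z z0 <-]; apply: lbS.
have dc : delta = (sign ^+ 2 * s - c1 * c ^+ 2) / c by rewrite /delta /t tE /c /s; field.
split.
  move=> dn0 /andP[ga0 ga1] lamopt.
  have sn0 : s != 0.
    apply/eqP => s0'; move: ga0; rewrite /gamma /t tE -/s s0' mul0r mulr0 mul0r ltxx //.
  have key : g lamopt * (sign ^+ 2 * t) = delta * K.
    rewrite dc gE /lamopt /t tE -/c -/s; field.
    by rewrite sn0 cn0 gt_eqF.
  have key2 : g lamopt * gamma = K.
    by rewrite /gamma -/t mulrA key; field.
  have gK : K < g lamopt by nra.
  have lp : 0 < lamopt.
    have : 0 < lamopt * c ^+ 2 by move: gK; rewrite gE; lra.
    by rewrite pmulr_lgt0 // exprn_gt0.
  split => // lam l0.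
  have gl0 : g lamopt != 0 by rewrite gt_eqF // gpos // ltW.
  have Bw : B = A * (g lamopt)^-1.
    rewrite /B /A.
    have -> : delta ^+ 2 * K = delta * (g lamopt * (sign ^+ 2 * t)) by rewrite key; ring.
    by field.
  rewrite -subr_ge0 (Hm lam l0) (Hm lamopt (ltW lp)) Pdiff Bw.
  set u := (g lam)^-1; set w := (g lamopt)^-1.
  have -> : (u - w) * (A * (u + w) - 2 * (A * w)) = A * (u - w) ^+ 2 by ring.
  by rewrite mulr_ge0 ?sqr_ge0 // ltW // /A mulr_gt0 // lt_def sqr_ge0 expf_eq0 (negbTE dn0) andbF.
move=> dn0 ga1 lam l0.
have d2 : 0 < delta ^+ 2 by rewrite lt_def sqr_ge0 expf_eq0 (negbTE dn0) andbF.
have hBg : B = gamma * delta ^+ 2 by rewrite /B /gamma /t; field.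
have g0E : g 0 = K by rewrite gE mul0r add0r.
have Au0 : A * (g 0)^-1 = delta ^+ 2 by rewrite g0E /A mulfK // gt_eqF.
have uu0 : (g lam)^-1 <= (g 0)^-1.
  by rewrite lef_pV2 ?posrE ?gpos // !gE; nra.
rewrite -subr_ge0 !Hm // Pdiff mulr_le0 //; first by rewrite subr_le0.
have A0 : 0 < A by rewrite /A mulr_gt0.
have : A * (g lam)^-1 <= A * (g 0)^-1 by rewrite ler_pM2l.
rewrite Au0 hBg; nra.
Qed.
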